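(* Let $A=[a_{ij}]$ be the adjacency matrix of a strongly connected, aperiodic directed graph on $\mathcal X=\{1,\ldots,n\}$, and let $N\ge1$ be such that all entries of $A^N$ are positive. Let $\lambda_A$ be the spectral radius of $A$, $u,v$ positive vectors with $A^Tu=\lambda_Au$, $Av=\lambda_Av$, $\sum_iu_iv_i=1$, $\nu_{RB}(i)=u_iv_i$, $r_{ij}=\frac{v_j}{\lambda_Av_i}a_{ij}$, and $\mathfrak M_{\rm RB}(x_0,\ldots,x_N)=\nu_{RB}(x_0)r_{x_0x_1}\cdots r_{x_{N-1}x_N}$. Let $\mu_0$ be a measure on $\mathcal X$ with $\mu_0(x)>0$ for all $x$ and $\mathfrak M(x_0,\ldots,x_N)=\mu_0(x_0)a_{x_0x_1}\cdots a_{x_{N-1}x_N}$. Then $\mathfrak M_{\rm RB}$ is the solution of the problem of minimizing $\mathbb D(P\|\mathfrak M)$ over all probability distributions $P$ on $\mathcal X^{N+1}$ whose marginals at times $0$ and $N$ both equal $\nu_{RB}$.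
   Context: Relative entropy of a probability distribution $P$ with respect to a nonnegative measure $Q$ on a finite set: $\mathbb D(P\|Q)=\sum_x P(x)\log\frac{P(x)}{Q(x)}$ if $\mathrm{supp}(P)\subseteq\mathrm{supp}(Q)$ (with $0\log0=0$), and $+\infty$ otherwise. *)

(* Defs.v *)
From HB Require Import structures.
From mathcomp Require Import all_boot all_order all_algebra.
From mathcomp Require Import complex.
From mathcomp Require Import reals ereal exp.
Set Implicit Arguments. Unset Strict Implicit. Unset Printing Implicit Defensive.
Import Order.TTheory GRing.Theory Num.Theory.
Local Open Scope ring_scope.

Definition adjmx (R : realType) (n : nat) (e : rel 'I_n) : 'M[R]_n :=
  \matrix_(i, j) (e i j)%:R.

Definition strongly_connected (n : nat) (e : rel 'I_n) : Prop :=
  forall i j : 'I_n, connect e i j.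

(* Aperiodic: the gcd of the lengths of all closed walks is 1, i.e. the only
   common divisor of all closed walk lengths is 1. A closed walk of length
   size s from i is a path i :: s ending at i. *)
Definition aperiodic (n : nat) (e : rel 'I_n) : Prop :=
  forall d : nat,
    (forall (i : 'I_n) (s : seq 'I_n),
        0 < size s -> path e i s -> last i s = i -> d %| size s)%N ->
    d = 1%N.

Definition is_spectral_radius (R : realType) (n : nat) (A : 'M[R]_n) (lam : R)
  : Prop :=
  let Ac := map_mx (fun x : R => x%:C)%C A in
  (forall mu : R[i], eigenvalue Ac mu -> `|mu| <= lam%:C%C) /\
  (exists mu : R[i], eigenvalue Ac mu /\ `|mu| = lam%:C%C).

Definition relent (R : realType) (T : finType) (P Q : T -> R) : \bar R :=
  if [forall x, (P x != 0) ==> (Q x != 0)]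
  then (\sum_(x | P x != 0) P x * ln (P x / Q x))%:E
  else +oo%E.

Definition pathT (n N : nat) := {ffun 'I_N.+1 -> 'I_n}.

Definition is_prob (R : realType) (T : finType) (P : T -> R) : Prop :=
  (forall x, 0 <= P x) /\ \sum_x P x = 1.

Definition marginal (R : realType) (n N : nat) (P : pathT n N -> R)
  (k : 'I_N.+1) (x : 'I_n) : R :=
  \sum_(w : pathT n N | w k == x) P w.

Definition markov_measure (R : realType) (n N : nat) (mu0 : 'I_n -> R)
  (q : 'I_n -> 'I_n -> R) (w : pathT n N) : R :=
  mu0 (w ord0) * \prod_(k < N) q (w (inord k)) (w (inord k.+1)).

(* Main.v *)
Require Import Defs.
From HB Require Import structures.
From mathcomp Require Import all_boot all_order all_algebra.
From mathcomp Require Import complex.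
From mathcomp Require Import reals ereal exp.
From mathcomp Require Import ring lra zify.
Import Order.TTheory GRing.Theory Num.Theory.
Local Open Scope ring_scope.

Section PathSum.
Variables (R : realType) (n : nat) (q : 'I_n -> 'I_n -> R).

Definition Top (h : 'I_n -> R) (x : 'I_n) : R := \sum_y q x y * h y.

Definition pcons N (p : 'I_n * pathT n N) : pathT n N.+1 :=
  [ffun k : 'I_N.+2 => if unlift ord0 k is Some k' then p.2 k' else p.1].

Definition pdecons N (w : pathT n N.+1) : 'I_n * pathT n N :=
  (w ord0, [ffun k => w (lift ord0 k)]).

Arguments pcons {N}.
Arguments pdecons {N}.

Lemma pconsK N : cancel (@pcons N) (@pdecons N).
Proof.
case=> x w; rewrite /pdecons /pcons /= ffunE unlift_none; congr (_, _).
by apply/ffunP=> k; rewrite !ffunE liftK.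
Qed.

Lemma pdeconsK N : cancel (@pdecons N) (@pcons N).
Proof.
move=> w; apply/ffunP=> k; rewrite /pcons /pdecons ffunE.
by case: unliftP => [j ->|->]; rewrite ?ffunE.
Qed.

Lemma inord_lift N (k : nat) : (k <= N)%N ->
  (inord k.+1 : 'I_N.+2) = lift ord0 (inord k : 'I_N.+1).
Proof.
move=> kN; apply/val_inj; rewrite /= /bump /= !inordK //; lia.
Qed.

Lemma pcons0 N (p : 'I_n * pathT n N) : pcons p ord0 = p.1.
Proof. by rewrite ffunE unlift_none. Qed.

Lemma pconsS N (p : 'I_n * pathT n N) k : pcons p (lift ord0 k) = p.2 k.
Proof. by rewrite ffunE liftK. Qed.

Lemma path_sum N (f g : 'I_n -> R) :
  \sum_(w : pathT n N) f (w ord0) *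
      \prod_(k < N) q (w (inord k)) (w (inord k.+1)) * g (w ord_max)
  = \sum_x f x * iter N Top g x.
Proof.
elim: N f => [|N IH] f.
  rewrite (reindex (fun x : 'I_n => [ffun _ : 'I_1 => x])) /=; last first.
    exists (fun w : pathT n 0 => w ord0) => [x _|w _]; first by rewrite ffunE.
    by apply/ffunP=> k; rewrite ffunE (ord1 k).
  by apply: eq_bigr => x _; rewrite !ffunE big_ord0 mulr1.
rewrite (reindex (@pcons N)) /=; last first.
  by exists (@pdecons N) => w _; [apply: pconsK|apply: pdeconsK].
rewrite -(pair_big xpredT xpredT (fun x w => f (pcons (x, w) ord0) *
  \prod_(k < N.+1) q (pcons (x, w) (inord k)) (pcons (x, w) (inord k.+1)) *
   g (pcons (x, w) ord_max))) /=.
apply: eq_bigr => x _.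
transitivity (\sum_(j : pathT n N) (f x * q x (j ord0)) *
   \prod_(k<N) q (j (inord k)) (j (inord k.+1)) * g (j ord_max)).
  apply: eq_bigr => j _.
  rewrite big_ord_recl pcons0 /=.
  have -> : (inord 0 : 'I_N.+2) = ord0 by apply/val_inj; rewrite /= inordK.
  rewrite pcons0 inord_lift // pconsS /=.
  have -> : (ord_max : 'I_N.+2) = lift ord0 (ord_max : 'I_N.+1).
    by apply/val_inj.
  rewrite pconsS /= -!mulrA; congr (_ * (_ * _)).
    by have -> : (inord 0 : 'I_N.+1) = ord0 by apply/val_inj; rewrite /= inordK.
  congr (_ * _); apply: eq_bigr => k _.
  have -> : bump 0 k = k.+1 by rewrite /bump leq0n.
  rewrite (@inord_lift N k) 1?(@inord_lift N k.+1) ?pconsS //=.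
  by apply: ltnW.
rewrite (IH (fun y => f x * q x y)) /Top mulr_sumr; apply: eq_bigr => y _; by rewrite mulrA.
Qed.
End PathSum.

Section Gibbs.
Variable R : realType.

Lemma ln_le_sub1 (y : R) : 0 < y -> ln y <= y - 1.
Proof.
move=> y0; have := @le_ln1Dx R (y - 1).
have -> : 1 + (y - 1) = y by ring.
by apply; lra.
Qed.

Lemma ln_eq_sub1 (y : R) : 0 < y -> y - 1 <= ln y -> y = 1.
Proof.
move=> y0 h; set s := Num.sqrt y.
have s0 : 0 < s by rewrite sqrtr_gt0.
have ys : y = s ^+ 2 by rewrite sqr_sqrtr ?ltW.
have hl : ln y = ln s *+ 2 by rewrite ys lnXn.
have h2 := @ln_le_sub1 s s0.
rewrite hl ys in h.
move: h; rewrite mulr2n => h.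
have e1 : s = 1.
  apply/eqP; rewrite eq_le; apply/andP; split; nra.
by rewrite ys e1 expr1n.
Qed.

Variables (T : finType) (P Q : T -> R).
Hypotheses (HP0 : forall x, 0 <= P x) (HP1 : \sum_x P x = 1)
  (HQ0 : forall x, 0 <= Q x) (HQ1 : \sum_x Q x = 1)
  (HPQ : forall x, P x != 0 -> 0 < Q x).

Let D := \sum_(x | P x != 0) P x * ln (P x / Q x).

Let term_ge x : P x != 0 -> P x - Q x <= P x * ln (P x / Q x).
Proof.
move=> Px; have p0 : 0 < P x by rewrite lt_def Px HP0.
have q0 := @HPQ x Px.
have := @ln_le_sub1 _ (divr_gt0 q0 p0).
rewrite !ln_div ?posrE // => h.
have : P x * (ln (Q x) - ln (P x)) <= P x * (Q x / P x - 1).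
  by rewrite ler_pM2l.
have e : P x * (Q x / P x - 1) = Q x - P x by field; rewrite gt_eqF.
rewrite e !mulrBr => h2; lra.
Qed.

Let sumP : \sum_(x | P x != 0) P x = 1.
Proof.
rewrite -HP1 [RHS](bigID (fun x => P x != 0)) /=.
rewrite [X in _ = _ + X]big1 ?addr0 // => x; by rewrite negbK => /eqP.
Qed.

Let sumQle : \sum_(x | P x != 0) Q x <= 1.
Proof.
rewrite -HQ1 [leRHS](bigID (fun x => P x != 0)) /= lerDl.
by apply: sumr_ge0.
Qed.

Lemma gibbs_ge0 : 0 <= D.
Proof.
apply: le_trans (_ : \sum_(x | P x != 0) (P x - Q x) <= D).
  by rewrite sumrB sumP subr_ge0.
by apply: ler_sum => x; apply: term_ge.
Qed.

Lemma gibbs_eq : D <= 0 -> forall x, P x = Q x.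
Proof.
move=> D0.
set t := fun x => P x * ln (P x / Q x) - (P x - Q x).
have tD : \sum_(x | P x != 0) t x = D - 1 + \sum_(x | P x != 0) Q x.
  rewrite /t sumrB sumrB sumP /D; lra.
have t0 : forall x, P x != 0 -> 0 <= t x by move=> x /term_ge; rewrite subr_ge0.
have st0 : 0 <= \sum_(x | P x != 0) t x by apply: sumr_ge0.
have SQ : \sum_(x | P x != 0) Q x = 1 by apply/eqP; rewrite eq_le sumQle; lra.
have tz : \sum_(x | P x != 0) t x = 0 by lra.
have tx := psumr_eq0P t0 tz.
have Qz : \sum_(x | ~~ (P x != 0)) Q x = 0.
  move: HQ1; rewrite (bigID (fun x => P x != 0)) /= SQ; lra.
have qx := psumr_eq0P (fun x _ => HQ0 x) Qz.
move=> x; case: (boolP (P x != 0)) => Px; last first.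
  by rewrite (qx x Px); apply/eqP; rewrite negbK in Px.
have p0 : 0 < P x by rewrite lt_def Px HP0.
have q0 := @HPQ x Px.
have := tx x Px; rewrite /t => /eqP; rewrite subr_eq0 => /eqP h.
have y1 : Q x / P x = 1.
  apply: ln_eq_sub1; first exact: divr_gt0.
  rewrite ln_div ?posrE //.
  move: h; rewrite ln_div ?posrE // => h.
  have e : P x * (Q x / P x - 1) = Q x - P x by field; rewrite gt_eqF.
  have : P x * (Q x / P x - 1) = P x * (ln (Q x) - ln (P x)).
    rewrite e mulrBr; rewrite mulrBr in h; lra.
  by move/(mulfI (lt0r_neq0 p0)) => ->.
have : Q x = Q x / P x * P x by field; rewrite gt_eqF.
by rewrite y1 mul1r.
Qed.
End Gibbs.

Section Relent.
Variables (R : realType) (T : finType) (P Q M h : T -> R).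
Hypotheses (HM : forall x, 0 <= M x) (hpos : forall x, 0 < h x)
  (HQ : forall x, Q x = M x * h x) (HP0 : forall x, 0 <= P x).

Lemma relent_fact : (forall x, P x != 0 -> M x != 0) ->
  relent P M = ((\sum_(x | P x != 0) P x * ln (P x / Q x)) +
                \sum_x P x * ln (h x))%:E.
Proof.
move=> HPM; rewrite /relent.
have -> : [forall x, (P x != 0) ==> (M x != 0)].
  by apply/forallP => x; apply/implyP/HPM.
congr EFin.
rewrite [X in _ = _ + X](bigID (fun x => P x != 0)) /=.
rewrite [X in _ = _ + (_ + X)]big1 ?addr0; last first.
  by move=> x; rewrite negbK => /eqP ->; rewrite mul0r.
rewrite -big_split /=; apply: eq_bigr => x Px.
have p0 : 0 < P x by rewrite lt_def Px HP0.
have m0 : 0 < M x by rewrite lt_def HPM ?HM.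
have hx := hpos x.
have q0 : 0 < Q x by rewrite HQ mulr_gt0.
rewrite -mulrDr; congr (_ * _).
rewrite HQ !ln_div ?posrE ?mulr_gt0 // lnM ?posrE //; ring.
Qed.
End Relent.

Lemma relent_Q (R : realType) (T : finType) (Q M h : T -> R) :
  (forall x, 0 <= M x) -> (forall x, 0 < h x) ->
  (forall x, Q x = M x * h x) ->
  relent Q M = (\sum_x Q x * ln (h x))%:E.
Proof.
move=> HM hpos HQ.
have Q0 : forall x, 0 <= Q x by move=> x; rewrite HQ mulr_ge0 // ltW.
rewrite (@relent_fact _ _ Q Q M h HM hpos HQ Q0); last first.
  by move=> x; rewrite HQ mulf_eq0 negb_or => /andP[].
rewrite big1 ?add0r // => x Qx.
by rewrite divff // ln1 mulr0.
Qed.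

Lemma marg_sum (R : realType) n N (P : pathT n N -> R) k (g : 'I_n -> R) :
  \sum_w P w * g (w k) = \sum_x marginal P k x * g x.
Proof.
rewrite (partition_big (fun w : pathT n N => w k) xpredT) //=.
apply: eq_bigr => x _; rewrite /marginal mulr_suml.
by apply: eq_bigr => w /eqP ->.
Qed.

Lemma marg_ind (R : realType) n N (P : pathT n N -> R) k x :
  marginal P k x = \sum_w P w * (w k == x)%:R.
Proof.
rewrite /marginal big_mkcond; apply: eq_bigr => w _.
by case: eqP; rewrite ?mulr1 ?mulr0.
Qed.
Theorem proposition4p2 (R : realType) (n : nat) (e : rel 'I_n) (N : nat)
  (lam : R) (u v : 'I_n -> R) (mu0 : 'I_n -> R) :
  strongly_connected e ->
  aperiodic e ->
  (1 <= N)%N ->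
  (forall i j, 0 < (adjmx R e ^+ N) i j) ->
  is_spectral_radius (adjmx R e) lam ->
  (forall i, 0 < u i) -> (forall i, 0 < v i) ->
  (forall i, \sum_j adjmx R e j i * u j = lam * u i) ->
  (forall i, \sum_j adjmx R e i j * v j = lam * v i) ->
  \sum_i u i * v i = 1 ->
  (forall x, 0 < mu0 x) ->
  let nuRB := fun i => u i * v i in
  let r := fun i j => v j / (lam * v i) * adjmx R e i j in
  let MRB := markov_measure (N := N) nuRB r in
  let M := markov_measure (N := N) mu0 (fun i j => adjmx R e i j) in
  let feasible := fun P : pathT n N -> R =>
    is_prob P /\ marginal P ord0 =1 nuRB /\ marginal P ord_max =1 nuRB in
  [/\ feasible MRB,
      (forall P, feasible P -> (relent MRB M <= relent P M)%E)
    & (forall P, feasible P -> (relent P M <= relent MRB M)%E -> P =1 MRB)].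
Proof.
Proof.
move=> Hsc Hap HN HAN Hsr Hu Hv HuA HvA Huv Hmu nuRB r MRB M feasible.
have aE : forall i j, adjmx R e i j = (e i j)%:R by move=> i j; rewrite mxE.
have a0 : forall i j, 0 <= adjmx R e i j by move=> i j; rewrite aE ler0n.
have lam0 : 0 < lam.
  case: (ltrP 0 lam) => // hl; exfalso.
  case: (pickP (@predT 'I_n)) => [i0 _|h0]; last first.
    move: Huv; rewrite big1 => [/eqP|x]; first by rewrite eq_sym oner_eq0.
    by have := h0 x.
  have s0 : \sum_j adjmx R e i0 j * v j = 0.
    apply/eqP; rewrite eq_le; apply/andP; split.
      by rewrite HvA mulr_le0_ge0 // ltW.
    by apply: sumr_ge0 => j _; rewrite mulr_ge0 // ltW.
  have z := psumr_eq0P (fun j _ => mulr_ge0 (a0 i0 j) (ltW (Hv j))) s0.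
  have az : forall j, adjmx R e i0 j = 0.
    move=> j; have /eqP := z j isT; rewrite mulf_eq0 (gt_eqF (Hv j)) orbF.
    by move/eqP.
  move: HN (HAN i0 i0); clear -az; case: N => [//|N'] _.
  rewrite exprS -mulmxE mxE big1 ?ltxx // => k _.
  by rewrite az mul0r.
have lamn0 : lam != 0 by rewrite gt_eqF.
have rsto : forall i, \sum_j r i j = 1.
  move=> i; have vi := gt_eqF (Hv i).
  transitivity ((\sum_j adjmx R e i j * v j) / (lam * v i)).
    rewrite mulr_suml; apply: eq_bigr => j _; rewrite /r; field.
    by rewrite vi.
  by rewrite HvA divff // mulf_neq0 // vi.
have nust : forall j, \sum_i nuRB i * r i j = nuRB j.
  move=> j; transitivity (v j / lam * \sum_i adjmx R e i j * u i).
    rewrite mulr_sumr; apply: eq_bigr => i _; rewrite /nuRB /r.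
    have vi := gt_eqF (Hv i); field; by rewrite lamn0 vi.
  by rewrite HuA /nuRB; field.
have it1 : forall m y, iter m (@Top _ _ r) (fun _ => 1) y = 1.
  elim=> // m IH y /=; rewrite /Top.
  under eq_bigr do rewrite IH mulr1.
  exact: rsto.
have itst : forall m h, \sum_y nuRB y * iter m (@Top _ _ r) h y = \sum_y nuRB y * h y.
  elim=> // m IH h; rewrite iterSr IH /Top.
  under eq_bigr do rewrite mulr_sumr.
  rewrite exchange_big /=; apply: eq_bigr => z _.
  rewrite -nust mulr_suml; apply: eq_bigr => y _; by rewrite mulrA.
have nu0 : forall x, 0 <= nuRB x by move=> x; rewrite mulr_ge0 // ltW.
have r0 : forall i j, 0 <= r i j.
  move=> i j; rewrite /r mulr_ge0 // divr_ge0 ?ltW ?mulr_gt0 //.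
have pick1 : forall x, \sum_y nuRB y * (y == x)%:R = nuRB x.
  move=> x; rewrite (bigD1 x) //= eqxx mulr1 big1 ?addr0 // => y /negbTE ->.
  by rewrite mulr0.
have m0 : marginal MRB ord0 =1 nuRB.
  move=> x; rewrite marg_ind.
  transitivity (\sum_(w : pathT n N) (fun y => nuRB y * (y == x)%:R) (w ord0) *
     \prod_(k < N) r (w (inord k)) (w (inord k.+1)) * (fun _ => 1) (w ord_max)).
    apply: eq_bigr => w _; rewrite /MRB /markov_measure /=; ring.
  rewrite (@path_sum _ _ r N (fun y => nuRB y * (y == x)%:R) (fun _ => 1)).
  under eq_bigr do rewrite it1 mulr1.
  exact: pick1.
have mN : marginal MRB ord_max =1 nuRB.
  move=> x; rewrite marg_ind.
  transitivity (\sum_(w : pathT n N) nuRB (w ord0) *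
     \prod_(k < N) r (w (inord k)) (w (inord k.+1)) * (fun y => (y == x)%:R) (w ord_max)).
    by apply: eq_bigr => w _; rewrite /MRB /markov_measure /=.
  by rewrite (@path_sum _ _ r N nuRB (fun y => (y == x)%:R)) itst pick1.
have MRB0 : forall w, 0 <= MRB w.
  by move=> w; rewrite /MRB /markov_measure mulr_ge0 // prodr_ge0.
have MRB1 : \sum_w MRB w = 1.
  have := @marg_sum R n N MRB ord0 (fun _ => 1).
  under eq_bigr do rewrite mulr1.
  move=> ->; under eq_bigr do rewrite mulr1 m0.
  exact: Huv.
have fMRB : feasible MRB by split; [split|split].
have tele : forall (w : pathT n N) m,
    v (w ord0) * \prod_(k < m) r (w (inord k)) (w (inord k.+1)) =
    v (w (inord m)) / lam ^+ m *
      \prod_(k < m) adjmx R e (w (inord k)) (w (inord k.+1)).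
  move=> w; elim=> [|m IH].
    rewrite !big_ord0 expr0 divr1 !mulr1.
    by have -> : (inord 0 : 'I_N.+1) = ord0 by apply/val_inj; rewrite /= inordK.
  rewrite !big_ord_recr /= mulrA IH /r.
  have vm := gt_eqF (Hv (w (inord m))).
  rewrite exprS; field.
  by rewrite vm lamn0 expf_neq0.
set F := fun x => u x / (lam ^+ N * mu0 x).
have Fpos : forall x, 0 < F x.
  by move=> x; rewrite /F divr_gt0 ?mulr_gt0 ?exprn_gt0.
set h := fun w : pathT n N => F (w ord0) * v (w ord_max).
have hpos : forall w, 0 < h w by move=> w; rewrite /h mulr_gt0.
have M0 : forall w, 0 <= M w.
  move=> w; rewrite /M /markov_measure; apply: mulr_ge0; [exact: ltW | by apply: prodr_ge0 => k _].
have fact : forall w, MRB w = M w * h w.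
  move=> w; rewrite /MRB /M /markov_measure /nuRB -mulrA tele /h /F.
  have -> : (inord N : 'I_N.+1) = ord_max by apply/val_inj; rewrite /= inordK.
  have mw := gt_eqF (Hmu (w ord0)).
  field; by rewrite mw expf_neq0.
have Kf : forall P, feasible P -> \sum_w P w * ln (h w) =
    \sum_x nuRB x * ln (F x) + \sum_x nuRB x * ln (v x).
  move=> P [_ [HP0m HPNm]].
  transitivity (\sum_w P w * ln (F (w ord0)) + \sum_w P w * ln (v (w ord_max))).
    by rewrite -big_split; apply: eq_bigr => w _; rewrite /h lnM ?posrE // mulrDr.
  rewrite (@marg_sum R n N P ord0 (fun x => ln (F x))).
  rewrite (@marg_sum R n N P ord_max (fun x => ln (v x))).
  by congr (_ + _); apply: eq_bigr => x _; rewrite ?HP0m ?HPNm.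
have Hrel : relent MRB M = (\sum_x nuRB x * ln (F x) + \sum_x nuRB x * ln (v x))%:E.
  by rewrite (@relent_Q R _ MRB M h M0 hpos fact) (Kf MRB fMRB).
split => // P fP; case: (fP) => [[HP0 HP1] _]; rewrite Hrel.
  case: (boolP [forall x, (P x != 0) ==> (M x != 0)]) => cond; last first.
    by rewrite /relent (negbTE cond) leey.
  have HPM : forall x, P x != 0 -> M x != 0.
    by move=> x; move/forallP: cond => /(_ x) /implyP.
  rewrite (@relent_fact R _ P MRB M h M0 hpos fact HP0 HPM) Kf // lee_fin lerDr.
  apply: (@gibbs_ge0 R _ P MRB HP0 HP1 MRB0 MRB1) => x /HPM Mx.
  by rewrite fact mulr_gt0 // lt_def Mx M0.
case: (boolP [forall x, (P x != 0) ==> (M x != 0)]) => cond; last first.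
  by rewrite /relent (negbTE cond) leye_eq.
have HPM : forall x, P x != 0 -> M x != 0.
  by move=> x; move/forallP: cond => /(_ x) /implyP.
rewrite (@relent_fact R _ P MRB M h M0 hpos fact HP0 HPM) Kf // lee_fin => H.
apply: (@gibbs_eq R _ P MRB HP0 HP1 MRB0 MRB1).
  by move=> x /HPM Mx; rewrite fact mulr_gt0 // lt_def Mx M0.
lra.
Qed.
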